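(* Let $\gamma>0$ and let $K(x,y)=e^{-\gamma|x-y|^2}$ be the one-dimensional Gaussian kernel on $\mathbb{R}$. There exists a finite dataset $X\subset\mathbb{R}$ such that for every $D\in\mathbb{N}$ and every map $\phi=(\phi_1,\dots,\phi_D):X\to\mathbb{R}^D$ satisfying $\sum_{j=1}^D\phi_j(x)\phi_j(y)=K(x,y)$ for all $x,y\in X$, there exists a component $\phi_j$, $j\in[D]$, that is not monotonic on $X$ (i.e. $\phi_j$ is neither nondecreasing nor nonincreasing as a function on the ordered set $X$). *)

(* Defs.v *)
From Stdlib Require Import Reals List.
Open Scope R_scope.

Definition gauss_kernel (gamma x y : R) : R := exp (- gamma * (Rabs (x - y)) ^ 2).

(* sum_{j=0}^{D-1} f j  (components indexed 0..D-1 instead of 1..D) *)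
Fixpoint sum_lt (D : nat) (f : nat -> R) : R :=
  match D with
  | O => 0
  | S d => sum_lt d f + f d
  end.

Definition nondecreasing_on (X : list R) (f : R -> R) : Prop :=
  forall x y, In x X -> In y X -> x <= y -> f x <= f y.
Definition nonincreasing_on (X : list R) (f : R -> R) : Prop :=
  forall x y, In x X -> In y X -> x <= y -> f y <= f x.
Definition monotonic_on (X : list R) (f : R -> R) : Prop :=
  nondecreasing_on X f \/ nonincreasing_on X f.

(* Main.v *)
Require Import Defs.
From Stdlib Require Import Reals List Lra Psatz.
Open Scope R_scope.

Lemma sum_lt_lin (D : nat) (f g h k : nat -> R) :
  sum_lt D (fun j => f j - g j - h j + k j) =
  sum_lt D f - sum_lt D g - sum_lt D h + sum_lt D k.
Proof. induction D as [|D IH]; simpl; [lra| rewrite IH; lra]. Qed.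

Lemma sum_lt_nonpos (D : nat) (f : nat -> R) :
  (forall j, (j < D)%nat -> f j <= 0) -> sum_lt D f <= 0.
Proof.
  induction D as [|D IH]; simpl; intros H; [lra|].
  assert (sum_lt D f <= 0) by (apply IH; intros; apply H; lia).
  assert (f D <= 0) by (apply H; lia). lra.
Qed.

Lemma kern_small (gamma t : R) : 0 < gamma -> 1 <= gamma * t ^ 2 ->
  exp (- gamma * t ^ 2) < /2.
Proof.
  intros hg ht.
  assert (h1 : 1 + 1 < exp 1) by (apply exp_ineq1; lra).
  assert (exp (- gamma * t ^ 2) <= exp (-1)).
  { destruct (Rle_lt_or_eq_dec _ _ ht) as [h|h].
    - left; apply exp_increasing; lra.
    - right; f_equal; lra. }
  assert (exp (-1) = / exp 1) by apply exp_Ropp.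
  assert (/ exp 1 < /2) by (apply Rinv_lt_contravar; lra).
  lra.
Qed.

Theorem theorem2 (gamma : R) (hgamma : 0 < gamma) :
  exists X : list R,
    forall (D : nat) (phi : nat -> R -> R),
      (forall x y, In x X -> In y X ->
         sum_lt D (fun j => phi j x * phi j y) = gauss_kernel gamma x y) ->
      exists j, (j < D)%nat /\ ~ monotonic_on X (phi j).
Proof.
  set (d := 1 + / gamma).
  assert (hd : 1 <= gamma * d ^ 2).
  { assert (gamma * d = gamma + 1) by (unfold d; field; lra).
    assert (1 <= d) by (unfold d; assert (0 < / gamma) by (apply Rinv_0_lt_compat; lra); lra).
    nra. }
  exists (0 :: d :: (2 * d) :: nil).
  intros D phi Hk.
  destruct (Classical_Prop.classic (exists j, (j < D)%nat /\ ~ monotonic_on (0 :: d :: (2 * d) :: nil) (phi j)))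
    as [Hex|Hn]; [exact Hex|exfalso].
  assert (Hm : forall j, (j < D)%nat -> monotonic_on (0 :: d :: (2 * d) :: nil) (phi j)).
  { intros j hj. apply Classical_Prop.NNPP. intro C. apply Hn. exists j. auto. }
  assert (ha : In 0 (0 :: d :: (2 * d) :: nil)) by (simpl; auto).
  assert (hb : In d (0 :: d :: (2 * d) :: nil)) by (simpl; auto).
  assert (hc : In (2*d) (0 :: d :: (2 * d) :: nil)) by (simpl; auto).
  assert (hdpos : 0 < d) by (unfold d; assert (0 < / gamma) by (apply Rinv_0_lt_compat; lra); lra).
  assert (Hs : sum_lt D (fun j => phi j d * phi j d - phi j d * phi j (2*d)
                  - phi j 0 * phi j d + phi j 0 * phi j (2*d)) <= 0).
  { apply sum_lt_nonpos. intros j hj.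
    destruct (Hm j hj) as [M|M]; unfold nondecreasing_on, nonincreasing_on in M.
    - assert (phi j 0 <= phi j d) by (apply M; auto; lra).
      assert (phi j d <= phi j (2*d)) by (apply M; auto; lra). nra.
    - assert (phi j d <= phi j 0) by (apply M; auto; lra).
      assert (phi j (2*d) <= phi j d) by (apply M; auto; lra). nra. }
  rewrite (sum_lt_lin D (fun j => phi j d * phi j d) (fun j => phi j d * phi j (2*d))
     (fun j => phi j 0 * phi j d) (fun j => phi j 0 * phi j (2*d))) in Hs.
  rewrite (Hk d d hb hb), (Hk d (2*d) hb hc), (Hk 0 d ha hb), (Hk 0 (2*d) ha hc) in Hs.
  unfold gauss_kernel in Hs. rewrite !pow2_abs in Hs.
  replace ((d - d) ^ 2) with 0 in Hs by ring.
  replace ((d - 2*d) ^ 2) with (d ^ 2) in Hs by ring.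
  replace ((0 - d) ^ 2) with (d ^ 2) in Hs by ring.
  replace (- gamma * 0) with 0 in Hs by ring. rewrite exp_0 in Hs.
  assert (exp (- gamma * d ^ 2) < /2) by (apply kern_small; auto).
  assert (0 < exp (- gamma * (0 - 2 * d) ^ 2)) by apply exp_pos.
  lra.
Qed.
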